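(* Consider the closed-loop scalar system $\dot X(t)=aX(t)+bU(t)$ with $a>0$, $b\ne0$, and the open-loop system $\dot X(t)=aX(t)$, both with random initial state $X(0)$, $h(X(0))<\infty$, $|X(0)|<L$ ($L$ known to sensor and controller), with the sensor communicating over the timing channel described in the context. If there exists an estimator such that in open loop $|X(t)-\hat X(t)|\to0$ in probability as $t\to\infty$, then there exists a controller such that in closed loop $|X(t)|\to0$ in probability as $t\to\infty$.
   Context: Timing channel: symbols from a one-element alphabet; initialized with a symbol received at time $0$; after the acknowledgment of the $i$-th reception the sender waits $W_{i+1}\ge0$ and transmits the next symbol, received after an i.i.d. random delay $S_{i+1}\ge0$; $D_i=W_i+S_i$. The sensor knows $X(0)$, $L$ and the dynamics and encodes into the waiting times (random i.i.d. codebook independent of delays; acknowledgments used only to avoid queuing). The controller (resp. estimator) at time $t$ computes $U(t)$ (resp. $\hat X(t)$) from the inter-reception times of all symbols received by time $t$, $L$, the dynamics (and, for the controller, its own past inputs). Control inputs are applied with infinite precision and zero delay. *)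

(* Defs.v *)
From HB Require Import structures.
From mathcomp Require Import all_boot all_order all_algebra.
From mathcomp Require Import all_classical all_reals all_analysis.
Set Implicit Arguments. Unset Strict Implicit. Unset Printing Implicit Defensive.
Import Order.TTheory GRing.Theory Num.Theory.
Import numFieldNormedType.Exports.
Local Open Scope classical_set_scope.
Local Open Scope ring_scope.

Section TimingChannel.
Context {R : realType} {d : measure_display} {T : measurableType d}
        {dC : measure_display} {CT : measurableType dC}.

Definition has_density (P : probability T R) (X0 : T -> R) (f : R -> R) :=
  [/\ forall x, 0 <= f x, measurable_fun setT f &
      forall A, measurable A ->
        P (X0 @^-1` A) = (\int[lebesgue_measure]_(x in A) (f x)%:E)%E].

Definition finite_diff_entropy (P : probability T R) (X0 : T -> R) :=
  exists f, has_density P X0 f /\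
    (lebesgue_measure).-integrable setT (fun x => (f x * ln (f x))%:E).

(* X0, the codebook randomness C and the delays S_1, S_2, ... (S i is the
   delay of symbol i+1) are mutually independent. *)
Definition mutually_indep (P : probability T R) (X0 : T -> R) (C : T -> CT)
    (S : nat -> T -> R) :=
  forall (n : nat) (A : set R) (B : set CT) (E : nat -> set R),
    measurable A -> measurable B -> (forall i, measurable (E i)) ->
    P (X0 @^-1` A `&` C @^-1` B `&` \bigcap_(i in `I_n) (S i @^-1` E i)) =
    (P (X0 @^-1` A) * P (C @^-1` B) * \prod_(i < n) P (S i @^-1` E i))%E.

Definition ident_distr (P : probability T R) (S : nat -> T -> R) :=
  forall i (A : set R), measurable A -> P (S i @^-1` A) = P (S 0 @^-1` A).

(* Waiting time W_{i+1} = enc i (X0 w) (C w); inter-reception time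
   D_{i+1} = W_{i+1} + S_{i+1}. *)
Definition inter_time (enc : nat -> R -> CT -> R) (X0 : T -> R) (C : T -> CT)
    (S : nat -> T -> R) (i : nat) (w : T) : R :=
  enc i (X0 w) (C w) + S i w.

(* reception time of symbol n (symbol 0 received at time 0) *)
Definition recv_time enc X0 C S (n : nat) (w : T) : R :=
  \sum_(i < n) inter_time enc X0 C S i w.

(* Information available at the receiver at time t: for each i, the
   inter-reception time D_{i+1} if symbol i+1 has been received by time t,
   and None otherwise. *)
Definition observation enc X0 C S (t : R) (w : T) : nat -> option R :=
  fun i => if recv_time enc X0 C S i.+1 w <= t
           then Some (inter_time enc X0 C S i w) else None.

Definition ol_state (a : R) (X0 : T -> R) (t : R) (w : T) : R :=
  expR (a * t) * X0 w.

Definition estimate (est : R -> CT -> (nat -> option R) -> R)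
    enc X0 C S (t : R) (w : T) : R :=
  est t (C w) (observation enc X0 C S t w).

Definition control (ctrl : R -> CT -> (nat -> option R) -> R)
    enc X0 C S (t : R) (w : T) : R :=
  ctrl t (C w) (observation enc X0 C S t w).

Definition admissible_input (U : R -> T -> R) :=
  forall w t, 0 <= t ->
    (lebesgue_measure).-integrable `[0, t] (fun s => (U s w)%:E).

(* Closed-loop solution of dX = aX + bU (variation of constants). *)
Definition cl_state (a b : R) (X0 : T -> R) (U : R -> T -> R)
    (t : R) (w : T) : R :=
  expR (a * t) * X0 w +
  Rintegral lebesgue_measure `[0, t] (fun s => expR (a * (t - s)) * (b * U s w)).

Definition cvg_in_prob_to0 (P : probability T R) (Y : R -> T -> R) :=
  (forall t, 0 <= t -> measurable_fun setT (Y t)) /\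
  forall eps : R, 0 < eps ->
    (fun t => P [set w | eps <= `|Y t w|]) @ +oo --> 0%E.

End TimingChannel.

(* Main.v *)
Require Import Defs.
From HB Require Import structures.
From mathcomp Require Import all_boot all_order all_algebra.
From mathcomp Require Import all_classical all_reals all_analysis.
From mathcomp Require Import measurable_realfun.
From mathcomp Require Import ring lra.
Set Implicit Arguments. Unset Strict Implicit. Unset Printing Implicit Defensive.
Import Order.TTheory GRing.Theory Num.Theory.
Import numFieldNormedType.Exports.
Local Open Scope classical_set_scope.
Local Open Scope ring_scope.



Lemma integrableU d (T : measurableType d) (R : realType)
  (mu : {measure set T -> \bar R}) (A B : set T) (f : T -> \bar R) :
  measurable A -> measurable B -> mu.-integrable A f -> mu.-integrable B f ->
  mu.-integrable (A `|` B) f.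
Proof.
move=> mA mB /integrableP[mfA iA] /integrableP[mfB iB].
have mBA : measurable (B `\` A) by exact: measurableD.
have mfBA := measurable_funS mB (@subDsetl _ B A) mfB.
apply/integrableP; split; first by apply/measurable_funU.
have -> : A `|` B = A `|` (B `\` A) by rewrite setUDr setDv setD0.
rewrite ge0_integral_setU //; last 2 first.
- apply: measurableT_comp => //.
  by apply/measurable_funU.
- by apply/disj_setPS => x [? []].
apply: lte_add_pinfty => //; apply: le_lt_trans iB.
apply: ge0_subset_integral => //.
  exact: measurableT_comp.

Qed.



Section step.
Context {R : realType}.
Local Notation mu := lebesgue_measure.

Lemma leb_itv_oc (x y : R) : x <= y -> (mu `]x, y] = (y - x)%:E)%E.
Proof.
move=> xy; apply: eq_trans (lebesgue_measure_itv _) _ => /=.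
rewrite lte_fin; case: ltgtP xy => // -> _; by rewrite subrr.
Qed.

Definition stepf (V : int -> R) (s : R) : R :=
  V (Num.ceil s - 1 - 1) - V (Num.ceil s - 1).

Lemma stepf_piece (V : int -> R) (n : nat) (t : R) : n%:R <= t <= n.+1%:R ->
  mu.-integrable `]n%:R, t] (EFin \o stepf V) /\
  \int[mu]_(x in `]n%:R, t]) stepf V x = (t - n%:R) * (V (n%:Z - 1) - V n%:Z).
Proof.
move=> /andP[nt tn].
have hn : n.+1%:Z - 1 = n%:Z by rewrite -addn1 PoszD addrK.
have E : {in `]n%:R, t]%classic, stepf V =1 cst (V (n%:Z - 1) - V n%:Z)}.
  move=> s /set_mem /=; rewrite in_itv /= => /andP[ns st].
  rewrite /stepf (@ceil_def _ s n.+1%:Z); last first.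
    by rewrite hn -!pmulrn ns /= (le_trans st).
  by rewrite hn.
have mI : measurable (`]n%:R, t] : set R) by [].
have ic : mu.-integrable `]n%:R, t] (EFin \o cst (V (n%:Z - 1) - V n%:Z)).
  apply: measurable_bounded_integrable => //.
    apply: (@le_lt_trans _ _ ((t - n%:R)%:E)); last exact: ltry.
    by rewrite le_eqVlt; apply/orP; left; apply/eqP; exact: leb_itv_oc.
  exact: bounded_cst.
split.
  apply: (@eq_integrable _ _ _ mu _ mI (EFin \o cst (V (n%:Z - 1) - V n%:Z))) ic => x xI /=.
  by rewrite (E x xI).
transitivity (\int[mu]_(x in `]n%:R, t]) (cst (V (n%:Z - 1) - V n%:Z) x)).
  by apply: eq_Rintegral.
rewrite Rintegral_cst // (_ : fine _ = t - n%:R); first by rewrite mulrC.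
by have /= := congr1 fine (leb_itv_oc nt).
Qed.

Lemma integrable_set1 (f : R -> \bar R) (r : R) : mu.-integrable [set r] f.
Proof.
apply/integrableP; split; first exact: measurable_fun_set1.
by rewrite integral_set1 ltry.
Qed.

Lemma stepf_int (V : int -> R) (hV : V (-1) = 0) (n : nat) (t : R) :
  n%:R <= t <= n.+1%:R ->
  mu.-integrable `[0, t] (EFin \o stepf V) /\
  \int[mu]_(x in `[0, t]) stepf V x =
    - V (n%:Z - 1) + (t - n%:R) * (V (n%:Z - 1) - V n%:Z).
Proof.
elim: n t => [|n IH] t /andP[nt tn].
- have E : `[0, t]%classic = [set 0] `|` `]0, t]%classic.
    by rewrite -set_itv1 -itv_bndbnd_setU // bnd_simp.
  have [ip vp] := @stepf_piece V 0 t (introT andP (conj nt tn)).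
  rewrite E; split; first by apply: integrableU => //; exact: integrable_set1.
  rewrite Rintegral_setU //; last 2 first.
  - by apply: integrableU => //; exact: integrable_set1.
  - by apply/disj_setPS => x [/= ->]; rewrite in_itv /= ltxx.
  by rewrite vp sub0r hV oppr0 add0r Rintegral_set1.
have n1 : n%:R <= n.+1%:R :> R by rewrite ler_nat.
have E : `[0, t]%classic = `[0, n.+1%:R]%classic `|` `]n.+1%:R, t]%classic.
  by rewrite -itv_bndbnd_setU // bnd_simp.
have [ip0 vp0] := IH n.+1%:R (introT andP (conj n1 (lexx _))).
have [ip vp] := @stepf_piece V n.+1 t (introT andP (conj nt tn)).
have hn : n.+1%:Z - 1 = n%:Z by rewrite -addn1 PoszD addrK.
rewrite E; split; first by apply: integrableU.
rewrite Rintegral_setU //; last 2 first.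
- by apply: integrableU.
- apply/disj_setPS => x [/=]; rewrite !in_itv /= => /andP[_ xn] /andP[nx _].
  by move: (lt_le_trans nx xn); rewrite ltxx.
by rewrite vp0 vp hn mulrS addrK mul1r addKr.

Qed.
End step.



Definition obs_restrict {R : realType} (j : R) (o : nat -> option R) : nat -> option R :=
  fun i => match o i with
           | Some v => if \sum_(k < i.+1) odflt 0 (o k) <= j then Some v else None
           | None => None end.

Section restr.
Context {R : realType} {d : measure_display} {T : measurableType d}
        {dC : measure_display} {CT : measurableType dC}.
Variables (X0 : T -> R) (C : T -> CT) (S : nat -> T -> R)
    (enc : nat -> R -> CT -> R).
Hypothesis hpos : forall i w, 0 <= inter_time enc X0 C S i w.

Lemma recv_mono (k i : nat) w : (k <= i)%N ->
  recv_time enc X0 C S k w <= recv_time enc X0 C S i w.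
Proof.
move=> ki; rewrite /recv_time -(subnKC ki) big_split_ord /= lerDl.
by apply: sumr_ge0 => l _.
Qed.

Lemma restrict_obs (j t : R) w : j <= t ->
  obs_restrict j (observation enc X0 C S t w) = observation enc X0 C S j w.
Proof.
move=> jt; apply/funext => i; rewrite /obs_restrict /observation.
case: ifP => hi.
  rewrite (_ : \sum_(k < i.+1) _ = recv_time enc X0 C S i.+1 w) //.
  rewrite /recv_time; apply: eq_bigr => k _.
  by rewrite ifT //= (le_trans _ hi) // recv_mono.
case: ifP => // hj; move: hi; rewrite (le_trans hj jt) //.
Qed.
End restr.



Definition Vfun {R : realType} {CT : Type} (a : R)
  (est : R -> CT -> (nat -> option R) -> R) (c : CT) (o : nat -> option R)
  (k : int) : R :=
  if k < 0 then 0 else expR (- (a * k%:~R)) * est k%:~R c (obs_restrict k%:~R o).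

Definition mkctrl {R : realType} {CT : Type} (a b : R)
  (est : R -> CT -> (nat -> option R) -> R) : R -> CT -> (nat -> option R) -> R :=
  fun s c o => expR (a * s) / b * stepf (Vfun a est c o) s.

Section main.
Context {R : realType} {d : measure_display} {T : measurableType d}
        {dC : measure_display} {CT : measurableType dC}.
Variables (X0 : T -> R) (C : T -> CT) (S : nat -> T -> R)
    (enc : nat -> R -> CT -> R) (a b : R) (est : R -> CT -> (nat -> option R) -> R).
Hypothesis hpos : forall i w, 0 <= inter_time enc X0 C S i w.

Definition Wf (w : T) (k : int) : R :=
  if k < 0 then 0 else expR (- (a * k%:~R)) * estimate est enc X0 C S k%:~R w.

Lemma control_eq : control (mkctrl a b est) enc X0 C S =
  fun s w => expR (a * s) / b * stepf (Wf w) s.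
Proof.
apply/funext => s; apply/funext => w; rewrite /control /mkctrl; congr (_ * _).
have h1 : (Num.ceil s - 1)%:~R <= s := ltW (ceilB1_lt s).
have h2 : (Num.ceil s - 1 - 1)%:~R <= s.
  by apply: le_trans h1; rewrite ler_int gerBl.
rewrite /stepf /Vfun /Wf /estimate.
by rewrite !restrict_obs.
Qed.

Lemma Wf_neg1 w : Wf w (-1) = 0.
Proof. by rewrite /Wf (_ : (-1 < 0 :> int) = true). Qed.

Lemma bounded_exp (t : R) : 0 < a -> 0 <= t ->
  [bounded expR (a * x) / b | x in `[0, t]%classic].
Proof.
move=> a0 t0; rewrite /bounded_near; near=> M => x /=; rewrite in_itv /= => /andP[x0 xt].
apply: (@le_trans _ _ (expR (a * t) / `|b|)).
  rewrite normrM normfV ger0_norm ?expR_ge0 // ler_wpM2r ?invr_ge0 //.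
  by rewrite ler_expR ler_pM2l.
by near: M; apply: nbhs_pinfty_ge; rewrite num_real.
Unshelve. all: end_near.
Qed.

Lemma adm : 0 < a -> admissible_input (control (mkctrl a b est) enc X0 C S).
Proof.
move=> a0 w t t0; rewrite control_eq.
have /andP[nt tn] := truncn_itv t0.
have [ip _] := stepf_int (Wf_neg1 w) (introT andP (conj nt (ltW tn))).
have : lebesgue_measure.-integrable `[0, t]
    ((EFin \o stepf (Wf w)) \* (EFin \o (fun x => (expR (a * x) / b)%R)))%E.
  apply: integrableMl => //; last exact: bounded_exp.
  apply: measurable_funM => //.
  apply: (@measurableT_comp _ _ _ _ _ _ expR _ (fun x => a * x)).
    exact: measurable_expR.
  exact: measurable_funM.
apply: eq_integrable => // x _ /=.
by rewrite -EFinM mulrC.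
Qed.

Lemma cl_eq w t : b != 0 -> 0 <= t ->
  cl_state a b X0 (control (mkctrl a b est) enc X0 C S) t w =
  expR (a * t) * (X0 w + (- Wf w ((Num.truncn t)%:Z - 1) +
     (t - (Num.truncn t)%:R) * (Wf w ((Num.truncn t)%:Z - 1) - Wf w (Num.truncn t)%:Z))).
Proof.
move=> b0 t0; rewrite control_eq /cl_state.
have /andP[nt tn] := truncn_itv t0.
have [ip vp] := stepf_int (Wf_neg1 w) (introT andP (conj nt (ltW tn))).
rewrite (_ : Rintegral _ _ _ = expR (a * t) * Rintegral lebesgue_measure `[0, t] (stepf (Wf w))).
  by rewrite mulrDr; congr (_ + _); congr (_ * _); exact: vp.
transitivity (Rintegral lebesgue_measure `[0, t] (fun s => expR (a * t) * stepf (Wf w) s)).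
  apply: eq_Rintegral => s _.
  have -> : expR (a * t) = expR (a * (t - s)) * expR (a * s).
    by rewrite -expRD -mulrDr subrK.
  by field.
by rewrite RintegralZl.
Qed.
End main.



Lemma comb_bound {R : realType} (u A B : R) : 0 <= u <= 1 ->
  `|(1 - u) * A + u * B| <= `|A| + `|B|.
Proof.
move=> /andP[u0 u1]; apply: (le_trans (ler_normD _ _)).
have u1' : 0 <= 1 - u by rewrite subr_ge0.
rewrite !normrM (ger0_norm u0) (ger0_norm u1'); apply: lerD.
  by apply: ler_piMl => //; rewrite lerBlDr lerDl.
by apply: ler_piMl.
Qed.

Lemma meas_ge {R : realType} d (T : measurableType d) (Y : T -> R) (e : R) :
  measurable_fun setT Y -> measurable [set w | e <= `|Y w|].
Proof.
move=> mY.
have mN : measurable_fun setT (fun w => `|Y w|) by apply: measurableT_comp.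
have := mN measurableT (`[e, +oo[%classic) (measurable_itv _).
rewrite setTI; congr measurable; apply/seteqP; split => w /=; rewrite in_itv /= andbT //.
Qed.

Section main2.
Context {R : realType} {d : measure_display} {T : measurableType d}
        {dC : measure_display} {CT : measurableType dC}.
Variables (X0 : T -> R) (C : T -> CT) (S : nat -> T -> R)
    (enc : nat -> R -> CT -> R) (a b : R) (est : R -> CT -> (nat -> option R) -> R).

Let Y := fun t w => ol_state a X0 t w - estimate est enc X0 C S t w.

Lemma Wf_diff w (k : int) : 0 <= k ->
  X0 w - Wf X0 C S enc a est w k = expR (- (a * k%:~R)) * Y k%:~R w.
Proof.
move=> k0; rewrite /Wf ifF; last by rewrite ltNge k0.
rewrite /Y /ol_state expRN.
have : expR (a * k%:~R) != 0 by rewrite gt_eqF // expR_gt0.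
by move=> ne; field.
Qed.

Lemma mWf (mX0 : measurable_fun setT X0)
  (mY : forall t, 0 <= t -> measurable_fun setT (Y t)) k :
  measurable_fun setT (fun w => Wf X0 C S enc a est w k).
Proof.
rewrite /Wf; have [k0|k0] := boolP (k < 0).
  exact: measurable_cst.

apply: measurable_funM => //.
have -> : estimate est enc X0 C S k%:~R = fun w => ol_state a X0 k%:~R w - Y k%:~R w.
  by apply/funext => w; rewrite /Y opprB addrC subrK.
apply: measurable_funB.
  by apply: measurable_funM.
by apply: mY; rewrite ler0z leNgt.
Qed.
End main2.

Unset Implicit Arguments.
Theorem lemma3 (R : realType) (d : measure_display) (T : measurableType d)
    (P : probability T R) (dC : measure_display) (CT : measurableType dC)
    (a b L : R) (X0 : T -> R) (C : T -> CT) (S : nat -> T -> R)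
    (enc : nat -> R -> CT -> R) :
  0 < a -> b != 0 ->
  measurable_fun setT X0 -> measurable_fun setT C ->
  (forall i, measurable_fun setT (S i)) ->
  finite_diff_entropy P X0 ->
  P [set w | `|X0 w| < L] = 1%E ->
  (forall i w, 0 <= S i w) -> ident_distr P S ->
  mutually_indep P X0 C S ->
  (forall i x c, 0 <= enc i x c) ->
  (exists est : R -> CT -> (nat -> option R) -> R,
     cvg_in_prob_to0 P
       (fun t w => ol_state a X0 t w - estimate est enc X0 C S t w)) ->
  exists ctrl : R -> CT -> (nat -> option R) -> R,
    admissible_input (control ctrl enc X0 C S) /\
    cvg_in_prob_to0 P (cl_state a b X0 (control ctrl enc X0 C S)).
Proof.
move=> a0 b0 mX0 mC mS hent hL hS hid hind henc [est [mY cY]].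
have hpos : forall i w, 0 <= inter_time enc X0 C S i w.
  by move=> i w; rewrite /inter_time addr_ge0.
exists (mkctrl a b est); split; first by apply: adm.
set Yf := fun t w => ol_state a X0 t w - estimate est enc X0 C S t w.
have mW := mWf mX0 mY.
have mcl : forall t, 0 <= t ->
    measurable_fun setT (cl_state a b X0 (control (mkctrl a b est) enc X0 C S) t).
  move=> t t0.
  have -> : cl_state a b X0 (control (mkctrl a b est) enc X0 C S) t =
    fun w => expR (a * t) * (X0 w + (- Wf X0 C S enc a est w ((Num.truncn t)%:Z - 1) +
     (t - (Num.truncn t)%:R) * (Wf X0 C S enc a est w ((Num.truncn t)%:Z - 1)
        - Wf X0 C S enc a est w (Num.truncn t)%:Z))).
    by apply/funext => w; apply: cl_eq.
  apply: measurable_funM => //; apply: measurable_funD => //.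
  apply: measurable_funD; first exact: measurable_funN.
  apply: measurable_funM => //; exact: measurable_funB.
split; first exact: mcl.
move=> eps eps0.
set K := expR (a * 2).
have K0 : 0 < K by exact: expR_gt0.
set del := eps / (2 * K).
have del0 : 0 < del by rewrite divr_gt0 // mulr_gt0.
have delK : K * (del + del) = eps by rewrite /del; field; rewrite gt_eqF.
set F := fun r => P [set w | del <= `|Yf r w|].
have Fcv : F r @[r --> +oo] --> 0%E by exact: cY.
have phicv : forall c : int, 0 <= c ->
    F (((Num.truncn (t : R))%:Z - c)%:~R) @[t --> +oo] --> 0%E.
  move=> c c0.
  have : ((((Num.truncn (t : R))%:Z - c)%:~R : R) @[t --> +oo] --> +oo).
    apply/cvgryPge => A; near=> t.
    rewrite rmorphB /= -pmulrn; have := truncnS_gt t; rewrite -natr1.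
    suff: A + 1 + c%:~R <= t by lra.
    near: t; apply: nbhs_pinfty_ge; exact: num_real.
  move/cvg_comp; apply; exact: Fcv.
apply: (squeeze_cvge (f := fun=> 0%E)
  (h := fun t => (F (((Num.truncn (t : R))%:Z - 1)%:~R) +
                  F (((Num.truncn (t : R))%:Z - 0)%:~R))%E)); last 2 first.
- exact: cvg_cst.
- rewrite -[X in _ --> X](adde0 0%E); apply: cvgeD => //; exact: phicv.
near=> t.
have t1 : 1 <= t by near: t; apply: nbhs_pinfty_ge; exact: num_real.
have t0 : 0 <= t by apply: le_trans t1.
apply/andP; split; first exact: measure_ge0.
set n := Num.truncn t.
have /andP[nt tn] := truncn_itv t0.
rewrite -/n -natr1 in nt tn.
have n1 : (1 <= n)%N by rewrite truncn_gt0.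
have k1 : 0 <= n%:Z - 1 by rewrite subr_ge0.
have k2 : 0 <= n%:Z - 0 by rewrite subr0.
have r1 : 0 <= (n%:Z - 1)%:~R :> R by rewrite ler0z.
have r2 : 0 <= (n%:Z - 0)%:~R :> R by rewrite ler0z.
have mA1 := meas_ge del (mY _ r1).
have mA2 := meas_ge del (mY _ r2).
apply: le_trans (measureU2 _ mA1 mA2).
apply: le_measure; rewrite ?inE; [exact: meas_ge (mcl t t0)| exact: measurableU|].
move=> w /= hw.
rewrite (cl_eq _ _ hpos) // -/n in hw.
set W1 := Wf X0 C S enc a est w (n%:Z - 1) in hw.
set W2 := Wf X0 C S enc a est w n%:Z in hw.
have e1 := Wf_diff X0 C S enc a est w k1.
have e2 := Wf_diff X0 C S enc a est w k2.
rewrite subr0 in e2.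
set u := t - n%:R in hw.
have u01 : 0 <= u <= 1 by apply/andP; split; rewrite /u; lra.
have eq : expR (a * t) * (X0 w + (- W1 + u * (W1 - W2))) =
  (1 - u) * (expR (a * t) * (X0 w - W1)) + u * (expR (a * t) * (X0 w - W2)).
  by ring.
rewrite eq in hw.
have hb := comb_bound (expR (a * t) * (X0 w - W1)) (expR (a * t) * (X0 w - W2)) u01.
set Y1 := ol_state a X0 (n%:Z - 1)%:~R w - estimate est enc X0 C S (n%:Z - 1)%:~R w.
set Y2 := ol_state a X0 (n%:Z - 0)%:~R w - estimate est enc X0 C S (n%:Z - 0)%:~R w.
have b1 : `|expR (a * t) * (X0 w - W1)| <= K * `|Y1|.
  rewrite e1 mulrA -expRD normrM ger0_norm ?expR_ge0 // ler_wpM2r //.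
  rewrite ler_expR -mulrN -mulrDr ler_pM2l // rmorphB /= -pmulrn; lra.
have b2 : `|expR (a * t) * (X0 w - W2)| <= K * `|Y2|.
  rewrite e2 mulrA -expRD normrM ger0_norm ?expR_ge0 // /Y2 subr0 ler_wpM2r //.
  rewrite ler_expR -mulrN -mulrDr ler_pM2l // -pmulrn; lra.
case: (leP del `|Y1|) => h1; [by left | right].
rewrite leNgt; apply/negP => h2.
have h3 : K * `|Y1| + K * `|Y2| < K * (del + del) by rewrite mulrDr ltrD // ltr_pM2l.
lra.
Unshelve. all: end_near.
Qed.
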